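(* Let $\bm{X}\in\mathbb{R}^{n_1\times r}$, $\bm{Y}\in\mathbb{R}^{n_2\times r}$, and let $\bm{X}_\star,\bm{Y}_\star$, $\bm{M}_\star=\bm{X}_\star\bm{Y}_\star^\top$ be as in the context. If $\|\bm{Y}-\bm{Y}_\star\|\le\sigma_1(\bm{Y}_\star)/4$, then \[ \|(\bm{X}\bm{Y}^\top-\bm{M}_\star)\bm{Y}\|_{\mathrm{F}}\le\frac32\sigma_1(\bm{Y}_\star)\Big(\|(\bm{X}-\bm{X}_\star)\bm{Y}^\top\|_{\mathrm{F}}+\|\bm{X}(\bm{Y}-\bm{Y}_\star)^\top\|_{\mathrm{F}}+\|\bm{X}-\bm{X}_\star\|_{\mathrm{F}}\|\bm{Y}-\bm{Y}_\star\|_{\mathrm{F}}\Big). \] Similarly, if $\|\bm{X}-\bm{X}_\star\|\le\sigma_1(\bm{X}_\star)/4$, then \[ \|(\bm{X}\bm{Y}^\top-\bm{M}_\star)^\top\bm{X}\|_{\mathrm{F}}\le\frac32\sigma_1(\bm{X}_\star)\Big(\|(\bm{X}-\bm{X}_\star)\bm{Y}^\top\|_{\mathrm{F}}+\|\bm{X}(\bm{Y}-\bm{Y}_\star)^\top\|_{\mathrm{F}}+\|\bm{X}-\bm{X}_\star\|_{\mathrm{F}}\|\bm{Y}-\bm{Y}_\star\|_{\mathrm{F}}\Big). \]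
   Context: $\bm{M}_\star\in\mathbb{R}^{n_1\times n_2}$ has rank $r$ and compact SVD $\bm{M}_\star=\bm{U}_\star\bm{\Sigma}_\star\bm{V}_\star^\top$; $\bm{X}_\star=\bm{U}_\star\bm{\Sigma}_\star^{1/2}$, $\bm{Y}_\star=\bm{V}_\star\bm{\Sigma}_\star^{1/2}$, so $\bm{M}_\star=\bm{X}_\star\bm{Y}_\star^\top$. $\sigma_1(\cdot)$ is the largest singular value and $\|\cdot\|$ the spectral norm. *)

(* Defs.v *)
From HB Require Import structures.
From mathcomp Require Import all_boot all_order all_algebra.
From mathcomp Require Import reals.
Set Implicit Arguments. Unset Strict Implicit. Unset Printing Implicit Defensive.
Import Order.TTheory GRing.Theory Num.Theory.
Local Open Scope ring_scope.

Section Norms.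
Variable R : realType.

Definition frob {m n : nat} (A : 'M[R]_(m, n)) : R :=
  Num.sqrt (\sum_(i < m) \sum_(j < n) A i j ^+ 2).

Definition specnorm {m n : nat} (A : 'M[R]_(m, n)) : R :=
  sup (fun t : R => exists x : 'cV[R]_n, frob x <= 1 /\ t = frob (A *m x)).

Definition sigma1 {m n : nat} (A : 'M[R]_(m, n)) : R :=
  Num.sqrt (sup (fun l : R => eigenvalue (A^T *m A) l)).

End Norms.

(* Main.v *)
Require Import Defs.
From HB Require Import structures.
From mathcomp Require Import all_boot all_order all_algebra.
From mathcomp Require Import classical_sets reals.
From mathcomp Require Import ring lra.
Set Implicit Arguments. Unset Strict Implicit.
Import Order.TTheory GRing.Theory Num.Theory.
Local Open Scope ring_scope.

Section Nrm.
Variable R : realType.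
Variable I : finType.

Definition nrm (a : I -> R) := Num.sqrt (\sum_i a i ^+ 2).

Lemma ss_ge0 (a : I -> R) : 0 <= \sum_i a i ^+ 2.
Proof. by apply: sumr_ge0 => i _; rewrite sqr_ge0. Qed.

Lemma nrm_ge0 a : 0 <= nrm a.
Proof. exact: sqrtr_ge0. Qed.

Lemma nrm_sq a : nrm a ^+ 2 = \sum_i a i ^+ 2.
Proof. by rewrite sqr_sqrtr // ss_ge0. Qed.

Lemma nrm_le a c : 0 <= c -> \sum_i a i ^+ 2 <= c ^+ 2 -> nrm a <= c.
Proof.
move=> c0 h; rewrite /nrm -(ger0_norm c0) -sqrtr_sqr.
by rewrite ler_sqrt // sqr_ge0.
Qed.

Lemma nrm0 a : nrm a = 0 -> forall i, a i = 0.
Proof.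
move=> h i; have: \sum_i a i ^+ 2 = 0 by rewrite -nrm_sq h expr0n.
move/eqP; rewrite psumr_eq0 => [|j _]; last by rewrite sqr_ge0.
by move/allP/(_ i (mem_index_enum i)); rewrite /= sqrf_eq0 => /eqP.
Qed.

Lemma CS (a b : I -> R) : \sum_i a i * b i <= nrm a * nrm b.
Proof.
set A := nrm a; set B := nrm b; set S := \sum_i a i * b i.
have h : 0 <= \sum_i (a i * B - b i * A) ^+ 2 by exact: ss_ge0.
have e : \sum_i (a i * B - b i * A) ^+ 2 =
   (\sum_i a i ^+ 2) * B ^+ 2 - S * (2 * A * B) + (\sum_i b i ^+ 2) * A ^+ 2.
  rewrite /S mulr_suml mulr_suml mulr_suml -sumrB -big_split /=.
  by apply: eq_bigr => i _; ring.
rewrite e -/A -/B -!nrm_sq -/A -/B in h.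
have A0 : 0 <= A := nrm_ge0 a; have B0 : 0 <= B := nrm_ge0 b.
have [AB0|ABp] := eqVneq (A * B) 0.
  move/eqP: AB0; rewrite mulf_eq0 => /orP [] /eqP h0.
    have z := @nrm0 _ h0; rewrite /S big1 => [|i _]; [exact: mulr_ge0 | by rewrite z mul0r].
  have z := @nrm0 _ h0; rewrite /S big1 => [|i _]; [exact: mulr_ge0 | by rewrite z mulr0].
have ABp' : 0 < A * B by rewrite lt_neqAle eq_sym ABp mulr_ge0.
nra.
Qed.

Lemma CS_sq (a b : I -> R) : (\sum_i a i * b i) ^+ 2 <= (\sum_i a i ^+ 2) * (\sum_i b i ^+ 2).
Proof.
have h1 := CS a b.
have h2 := CS (fun i => - a i) b.
have e : \sum_i - a i * b i = - \sum_i a i * b i.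
  by rewrite -sumrN; apply: eq_bigr => i _; rewrite mulNr.
have e2 : nrm (fun i => - a i) = nrm a.
  by rewrite /nrm; congr Num.sqrt; apply: eq_bigr => i _; rewrite sqrrN.
rewrite e e2 in h2.
rewrite -!nrm_sq.
have := nrm_ge0 a; have := nrm_ge0 b; nra.
Qed.

Lemma nrmD (a b : I -> R) : nrm (fun i => a i + b i) <= nrm a + nrm b.
Proof.
apply: nrm_le; first by rewrite addr_ge0 ?nrm_ge0.
have e : \sum_i (a i + b i) ^+ 2 = \sum_i a i ^+ 2 + (\sum_i a i * b i) *+ 2 + \sum_i b i ^+ 2.
  rewrite -sumrMnl -!big_split /=; apply: eq_bigr => i _; ring.
rewrite e -!nrm_sq; have := CS a b; nra.
Qed.

End Nrm.

Section Frob.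
Variable R : realType.

Lemma frobE m n (A : 'M[R]_(m, n)) : frob A = nrm (fun p : 'I_m * 'I_n => A p.1 p.2).
Proof. by rewrite /frob /nrm pair_big. Qed.

Lemma frob_ge0 m n (A : 'M[R]_(m, n)) : 0 <= frob A.
Proof. exact: sqrtr_ge0. Qed.

Lemma frob_sq m n (A : 'M[R]_(m, n)) : frob A ^+ 2 = \sum_i \sum_j A i j ^+ 2.
Proof. by rewrite frobE nrm_sq pair_big. Qed.

Lemma frob_le m n (A : 'M[R]_(m, n)) c : 0 <= c ->
  \sum_i \sum_j A i j ^+ 2 <= c ^+ 2 -> frob A <= c.
Proof. by move=> c0; rewrite frobE pair_big; apply: nrm_le. Qed.

Lemma frobD m n (A B : 'M[R]_(m, n)) : frob (A + B) <= frob A + frob B.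
Proof.
rewrite !frobE; apply: le_trans (nrmD _ _); rewrite le_eqVlt; apply/orP; left.
by apply/eqP; rewrite /nrm; congr Num.sqrt; apply: eq_bigr => p _; rewrite mxE.
Qed.

Lemma frobN m n (A : 'M[R]_(m, n)) : frob (- A) = frob A.
Proof. by rewrite /frob; congr Num.sqrt; apply: eq_bigr => i _; apply: eq_bigr => j _; rewrite mxE sqrrN. Qed.

Lemma frobB m n (A B : 'M[R]_(m, n)) : frob (A - B) <= frob A + frob B.
Proof. by rewrite -(frobN B); apply: frobD. Qed.

Lemma frob_tr m n (A : 'M[R]_(m, n)) : frob A^T = frob A.
Proof.
rewrite /frob exchange_big; congr Num.sqrt; apply: eq_bigr => i _;
by apply: eq_bigr => j _; rewrite mxE.
Qed.

Lemma frobM m n p (A : 'M[R]_(m, n)) (B : 'M[R]_(n, p)) : frob (A *m B) <= frob A * frob B.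
Proof.
apply: frob_le; first by rewrite mulr_ge0 ?frob_ge0.
rewrite exprMn !frob_sq (exchange_big _ _ _ _ _ (fun i j => B i j ^+ 2)) mulr_suml.
apply: ler_sum => i _; rewrite mulr_sumr; apply: ler_sum => j _.
rewrite mxE; exact: CS_sq.
Qed.

Lemma frob_rowE n (u : 'rV[R]_n) : frob u = nrm (fun k => u 0 k).
Proof. by rewrite /frob /nrm big_ord1. Qed.

Lemma frob_colE n (u : 'cV[R]_n) : frob u = nrm (fun k => u k 0).
Proof. by rewrite /frob /nrm; congr Num.sqrt; apply: eq_bigr => i _; rewrite big_ord1. Qed.

Lemma frob_rows m n (A : 'M[R]_(m, n)) : frob A ^+ 2 = \sum_i frob (row i A) ^+ 2.
Proof.
rewrite frob_sq; apply: eq_bigr => i _; rewrite frob_sq big_ord1.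
by apply: eq_bigr => j _; rewrite mxE.
Qed.

End Frob.

Section Spec.
Variable R : realType.

Lemma frob0 m n : frob (0 : 'M[R]_(m, n)) = 0.
Proof.
apply/eqP; rewrite eq_le frob_ge0 andbT; apply: frob_le => //.
by rewrite expr0n /= big1 // => i _; rewrite big1 // => j _; rewrite mxE expr0n.
Qed.

Lemma frobZ m n (c : R) (A : 'M[R]_(m, n)) : frob (c *: A) = `|c| * frob A.
Proof.
rewrite /frob -sqrtr_sqr -sqrtrM ?sqr_ge0 //; congr Num.sqrt.
rewrite mulr_sumr; apply: eq_bigr => i _; rewrite mulr_sumr; apply: eq_bigr => j _.
by rewrite mxE exprMn.
Qed.

Lemma spec_has_sup m n (Y : 'M[R]_(m, n)) :
  has_sup (fun t : R => exists x : 'cV[R]_n, frob x <= 1 /\ t = frob (Y *m x)).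
Proof.
split.
  by exists 0; exists 0; rewrite frob0 mulmx0 frob0.
exists (frob Y) => t [x [hx ->]].
apply: le_trans (frobM _ _) _.
by rewrite -{2}(mulr1 (frob Y)) ler_wpM2l ?frob_ge0.
Qed.

Lemma spec_ge0 m n (Y : 'M[R]_(m, n)) : 0 <= specnorm Y.
Proof.
apply: sup_upper_bound; first exact: spec_has_sup.
by exists 0; rewrite frob0 mulmx0 frob0.
Qed.

Lemma spec_bound m n (Y : 'M[R]_(m, n)) (x : 'cV[R]_n) : frob (Y *m x) <= specnorm Y * frob x.
Proof.
have [x0|xp] := eqVneq (frob x) 0.
  by rewrite x0 mulr0; apply: le_trans (frobM _ _) _; rewrite x0 mulr0.
have xpos : 0 < frob x by rewrite lt_neqAle eq_sym xp frob_ge0.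
have h : frob (Y *m ((frob x)^-1 *: x)) <= specnorm Y.
  apply: sup_upper_bound; first exact: spec_has_sup.
  exists ((frob x)^-1 *: x); split => //.
  by rewrite frobZ ger0_norm ?invr_ge0 ?frob_ge0 // mulVf.
rewrite -scalemxAr frobZ ger0_norm ?invr_ge0 ?frob_ge0 // in h.
by rewrite -ler_pdivrMr // mulrC.
Qed.

Lemma spec_le m n (Y : 'M[R]_(m, n)) c : 0 <= c ->
  (forall x : 'cV[R]_n, frob (Y *m x) <= c * frob x) -> specnorm Y <= c.
Proof.
move=> c0 h; apply: ge_sup; first by exists 0; exists 0; rewrite frob0 mulmx0 frob0.
move=> t [x [hx ->]]; apply: le_trans (h x) _.
by rewrite -{2}(mulr1 c) ler_wpM2l.
Qed.

Lemma spec_frob m n (Y : 'M[R]_(m, n)) : specnorm Y <= frob Y.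
Proof. by apply: spec_le; [exact: frob_ge0 | move=> x; exact: frobM]. Qed.

Lemma specD m n (A B : 'M[R]_(m, n)) : specnorm (A + B) <= specnorm A + specnorm B.
Proof.
apply: spec_le; first by rewrite addr_ge0 ?spec_ge0.
move=> x; rewrite mulmxDl mulrDl; apply: le_trans (frobD _ _) _.
by rewrite lerD ?spec_bound.
Qed.

Lemma row_bound m n (u : 'rV[R]_m) (Y : 'M[R]_(m, n)) :
  frob (u *m Y) <= frob u * specnorm Y.
Proof.
set v := u *m Y; set w := Y *m v^T.
have e : frob v ^+ 2 = \sum_k u 0 k * w k 0.
  rewrite frob_rowE nrm_sq.
  have -> : \sum_j v 0 j ^+ 2 = \sum_j \sum_k u 0 k * Y k j * v 0 j.
    by apply: eq_bigr => j _; rewrite {1}/v mxE expr2 mulr_suml.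
  rewrite exchange_big; apply: eq_bigr => k _; rewrite mxE mulr_sumr.
  by apply: eq_bigr => j _; rewrite [v^T _ _]mxE mulrA.
have h1 : \sum_k u 0 k * w k 0 <= frob u * frob w.
  by rewrite frob_rowE frob_colE; apply: CS.
have h2 : frob w <= specnorm Y * frob v by rewrite -(frob_tr v) spec_bound.
have := frob_ge0 u; have := frob_ge0 v; have := frob_ge0 w; have := spec_ge0 Y.
rewrite -e in h1.
move=> s0 w0 v0 u0.
have h3 : frob v * frob v <= (frob u * specnorm Y) * frob v.
  rewrite -expr2; apply: le_trans h1 _; rewrite -mulrA; exact: ler_wpM2l.
have [->|vp] := eqVneq (frob v) 0; first by rewrite mulr_ge0.
by rewrite -(ler_pM2r (_ : 0 < frob v)) // lt_neqAle eq_sym vp.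
Qed.

Lemma frob_mul_spec m n p (A : 'M[R]_(m, n)) (Y : 'M[R]_(n, p)) :
  frob (A *m Y) <= frob A * specnorm Y.
Proof.
apply: frob_le; first by rewrite mulr_ge0 ?frob_ge0 ?spec_ge0.
rewrite -frob_sq frob_rows exprMn frob_rows mulr_suml; apply: ler_sum => i _.
rewrite -exprMn row_mul; apply: lerXn2r; rewrite ?nnegrE ?frob_ge0 ?mulr_ge0 ?spec_ge0 //.
  by rewrite frob_ge0.
exact: row_bound.
Qed.

End Spec.

Section Ws.
Variable R : realType.

Lemma frob_col_sq n (w : 'cV[R]_n) : frob w ^+ 2 = (w^T *m w) 0 0.
Proof.
rewrite frob_colE nrm_sq mxE; apply: eq_bigr => i _; by rewrite mxE expr2.
Qed.

Lemma spec_Ws n r (W : 'M[R]_(n, r)) (s : 'rV[R]_r)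
  (hW : W^T *m W = 1%:M)
  (hs_pos : forall i, 0 < s 0 i)
  (hs_sorted : forall i j : 'I_r, (i <= j)%N -> s 0 j <= s 0 i) :
  specnorm (W *m diag_mx (map_mx Num.sqrt s)) <= sigma1 (W *m diag_mx (map_mx Num.sqrt s)).
Proof.
case: r W s hW hs_pos hs_sorted => [|r] W s hW hpos hsort.
  apply: le_trans (spec_frob _) _; rewrite /frob big1 ?sqrtr0 ?sqrtr_ge0 // => i _.
  by rewrite big_ord0.
set a := map_mx Num.sqrt s; set Ws := W *m diag_mx a.
have s0 : forall j, 0 <= s 0 j by move=> j; exact: ltW.
have a2 : forall j, a 0 j ^+ 2 = s 0 j by move=> j; rewrite mxE sqr_sqrtr.
apply: (@le_trans _ _ (Num.sqrt (s 0 0))).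
  apply: spec_le; first exact: sqrtr_ge0.
  move=> x; rewrite /Ws -mulmxA; set z := diag_mx a *m x.
  have -> : frob (W *m z) = frob z.
    have h : frob (W *m z) ^+ 2 = frob z ^+ 2.
      by rewrite !frob_col_sq trmx_mul mulmxA -(mulmxA z^T) hW mulmx1.
    by apply/eqP; rewrite -(eqrXn2 (_ : (0 < 2)%N)) ?frob_ge0 // h.
  apply: frob_le; first by rewrite mulr_ge0 ?sqrtr_ge0 ?frob_ge0.
  rewrite exprMn sqr_sqrtr // frob_sq mulr_sumr; apply: ler_sum => i _.
  rewrite mulr_sumr; apply: ler_sum => j _.
  rewrite /z mul_diag_mx mxE exprMn a2; apply: ler_wpM2r; first exact: sqr_ge0.
  exact: hsort.
rewrite /sigma1; apply: ler_wsqrtr.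
set G := Ws^T *m Ws.
have vG : forall v : 'rV[R]_r.+1, forall j, (v *m G) 0 j = v 0 j * s 0 j.
  move=> v j; rewrite /G /Ws trmx_mul tr_diag_mx -!mulmxA (mulmxA W^T) hW mul1mx.
  by rewrite mulmxA mul_mx_diag mxE mul_mx_diag mxE -mulrA -expr2 a2.
have E0 : eigenvalue G (s 0 0).
  apply/eigenvalueP; exists (delta_mx 0 0).
    apply/matrixP => i j; rewrite ord1 vG !mxE /=.
    by have [->|jn] := eqVneq j 0; rewrite ?eqxx ?(negPf jn) ?mul1r ?mulr1 ?mul0r ?mulr0.
  apply/eqP => /matrixP /(_ 0 0); rewrite !mxE eqxx /= => /eqP; by rewrite oner_eq0.
apply: sup_upper_bound => //; split; first by exists (s 0 0).
exists (s 0 0) => l /eigenvalueP [v hv vnz].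
have [j hj] : exists j, v 0 j != 0.
  apply/existsP; apply: contraNT vnz => /existsPn hn; apply/eqP/matrixP => i j.
  by rewrite ord1 mxE; apply/eqP; exact: negbNE (hn j).
have := congr1 (fun M : 'M[R]_(1, r.+1) => M 0 j) hv; rewrite /= vG mxE mulrC => /mulIf <- //.
exact: hsort.
Qed.

End Ws.
Section Main.
Variable R : realType.

Lemma core n1 n2 r (D : 'M[R]_(n1, n2)) (Y Ys : 'M[R]_(n2, r)) (sg E : R) :
  specnorm Ys <= sg -> specnorm (Y - Ys) <= sg / 4 -> frob D <= E ->
  frob (D *m Y) <= 3 / 2 * sg * E.
Proof.
move=> h1 h2 h3.
have hY : specnorm Y <= specnorm Ys + specnorm (Y - Ys).
  by rewrite {1}(_ : Y = Ys + (Y - Ys)) ?specD // addrC subrK.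
have := frob_mul_spec D Y; have := frob_ge0 D; have := spec_ge0 Ys;
have := spec_ge0 Y; have := spec_ge0 (Y - Ys).
move=> a1 a2 a3 a4 a5.
apply: le_trans a5 _.
have : frob D * specnorm Y <= E * (sg + sg / 4).
  apply: ler_pM => //; lra.
have : 0 <= E by lra.
have : 0 <= sg by lra.
nra.
Qed.

Lemma zid (V : zmodType) (a b c d : V) : a - d = (a - b) + (a - c) + (-(a - b) - -(c - d)).
Proof.
by rewrite opprK opprB addrACA -[a - b]opprB addNr add0r addrA subrK.
Qed.

Lemma decomp n1 n2 r (X Xs : 'M[R]_(n1, r)) (Y Ys : 'M[R]_(n2, r)) :
  frob (X *m Y^T - Xs *m Ys^T) <=
  frob ((X - Xs) *m Y^T) + frob (X *m (Y - Ys)^T) + frob (X - Xs) * frob (Y - Ys).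
Proof.
have -> : X *m Y^T - Xs *m Ys^T =
   (X - Xs) *m Y^T + X *m (Y - Ys)^T - (X - Xs) *m (Y - Ys)^T.
  rewrite !linearB /= !mulmxBl; exact: zid.
apply: le_trans (frobB _ _) _; apply: lerD; first exact: frobD.
by apply: le_trans (frobM _ _) _; rewrite frob_tr.
Qed.

End Main.
Unset Implicit Arguments.

Theorem lemma4 (R : realType) (n1 n2 r : nat)
  (Mstar : 'M[R]_(n1, n2)) (U : 'M[R]_(n1, r)) (V : 'M[R]_(n2, r))
  (s : 'rV[R]_r)
  (hU : U^T *m U = 1%:M) (hV : V^T *m V = 1%:M)
  (hs_pos : forall i, 0 < s 0 i)
  (hs_sorted : forall i j : 'I_r, (i <= j)%N -> s 0 j <= s 0 i)
  (hM : Mstar = U *m diag_mx s *m V^T)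
  (X : 'M[R]_(n1, r)) (Y : 'M[R]_(n2, r)) :
  let Xs := U *m diag_mx (map_mx Num.sqrt s) in
  let Ys := V *m diag_mx (map_mx Num.sqrt s) in
  let E := frob ((X - Xs) *m Y^T) + frob (X *m (Y - Ys)^T)
           + frob (X - Xs) * frob (Y - Ys) in
  (specnorm (Y - Ys) <= sigma1 Ys / 4 ->
     frob ((X *m Y^T - Mstar) *m Y) <= 3 / 2 * sigma1 Ys * E) /\
  (specnorm (X - Xs) <= sigma1 Xs / 4 ->
     frob ((X *m Y^T - Mstar)^T *m X) <= 3 / 2 * sigma1 Xs * E).
Proof.
move=> Xs Ys E.
have dd : diag_mx (map_mx Num.sqrt s) *m diag_mx (map_mx Num.sqrt s) = diag_mx s.
  apply/matrixP => i j; rewrite mul_diag_mx !mxE.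
  case: eqP => _; rewrite ?mulr1n ?mulr0n ?mulr0 //.
  by rewrite -expr2 sqr_sqrtr // ltW.
have hM' : Mstar = Xs *m Ys^T.
  rewrite hM /Xs /Ys trmx_mul tr_diag_mx !mulmxA.
  by rewrite -dd !mulmxA.
have hE : frob (X *m Y^T - Mstar) <= E by rewrite hM'; exact: decomp.
split => h.
  exact: (core (spec_Ws hV hs_pos hs_sorted) h hE).
by apply: (core (spec_Ws hU hs_pos hs_sorted) h); rewrite frob_tr.
Qed.
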